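(* Let $\mathcal{F}$ be the linear operator on $A(D)$ given by \[ \mathcal{F}\Big(\sum_{n\ge0}a_nz^n\Big)=\sum_{n\ge0}a_nz^{2n}+\sum_{k\ge0}a_{3k+2}z^{2k+1}. \] Then $\mathcal{F}\in\mathcal{L}(A(D))$ (continuous for the topology of uniform convergence on compact subsets), $\mathcal{F}$ is injective on $A(D)$ and has closed range in $A(D)$. Furthermore, $\mathcal{F}$ maps $H^2(D)$ into itself, $\mathcal{F}\in\mathcal{L}(H^2(D))$ with $\|\mathcal{F}\|_{\mathcal{L}(H^2(D))}\le\sqrt2$, and $\mathcal{F}$ is expansive in $H^2(D)$: $\|f\|_{H^2(D)}\le\|\mathcal{F}f\|_{H^2(D)}$ for all $f\in H^2(D)$.
   Context: $D$ is the open unit disk, $A(D)$ the space of holomorphic functions on $D$ with the topology of uniform convergence on compact subsets, and $H^2(D)$ the Hardy space with $\|f\|_{H^2(D)}^2=\sup_{0\le r<1}\frac1{2\pi}\int_0^{2\pi}|f(re^{i\phi})|^2d\phi$ (so $\|\sum a_nz^n\|^2=\sum|a_n|^2$). Equivalently, $\mathcal{F}g(z)=g(z^2)+\frac{z^{-1/3}}{3}\big(g(z^{2/3})+e^{2\pi i/3}g(z^{2/3}e^{2\pi i/3})+e^{4\pi i/3}g(z^{2/3}e^{4\pi i/3})\big)$, and $\mathcal{F}(\sum a_nz^n)=\sum a_{T(n)}z^n$ where $T$ is the Collatz map $T(n)=\frac{3n+1}2$ ($n$ odd), $T(n)=\frac n2$ ($n$ even). *)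

(* Defs.v *)
From Stdlib Require Import Reals.
From Coquelicot Require Import Coquelicot.

Open Scope R_scope.

(* A holomorphic function on D is represented by its Taylor coefficient
   sequence a : nat -> C; it belongs to A(D) iff its power series converges
   at every point of the open unit disk D. *)
Definition InAD (a : nat -> C) : Prop :=
  forall z : C, Cmod z < 1 -> @ex_pseries C_AbsRing C_NormedModule a z.

Definition eval (a : nat -> C) (z : C) : C :=
  (Series (fun n => Re (Cmult (a n) (@pow_n C_Ring z n))),
   Series (fun n => Im (Cmult (a n) (@pow_n C_Ring z n)))).

(* Convergence in A(D): uniform convergence on compact subsets of D,
   i.e. on every closed disk |z| <= r with 0 <= r < 1. *)
Definition cvg_AD (fs : nat -> nat -> C) (f : nat -> C) : Prop :=
  forall r : R, 0 <= r < 1 -> forall eps : R, 0 < eps ->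
    exists N : nat, forall k : nat, (N <= k)%nat ->
      forall z : C, Cmod z <= r -> Cmod (Cminus (eval (fs k) z) (eval f z)) < eps.

Definition collatzT (n : nat) : nat :=
  if Nat.even n then Nat.div2 n else Nat.div2 (3 * n + 1).

(* F (sum a_n z^n) = sum a_n z^{2n} + sum a_{3k+2} z^{2k+1}
   = sum a_{T(n)} z^n. *)
Definition Fop (a : nat -> C) : nat -> C := fun n => a (collatzT n).

Definition InH2 (a : nat -> C) : Prop :=
  ex_series (fun n => Cmod (a n) ^ 2).

Definition H2norm (a : nat -> C) : R :=
  sqrt (Series (fun n => Cmod (a n) ^ 2)).

(* Main.v *)
Require Import Defs.
From Stdlib Require Import Reals Lra Lia FunctionalExtensionality.
From Coquelicot Require Import Coquelicot.
Open Scope R_scope.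


Lemma Series_zero : Series (fun _ => 0) = 0.
Proof.
  rewrite (Series_ext (fun _ => 0) (fun n => 0 * 1)) by (intros; ring).
  rewrite Series_scal_l; ring.
Qed.

Lemma Series_nonneg (u : nat -> R) : (forall n, 0 <= u n) -> ex_series u -> 0 <= Series u.
Proof.
  intros Hu Hex. rewrite <- Series_zero. apply Series_le; auto. intros; split; [lra|auto].
Qed.

Lemma psum_le_series (u : nat -> R) N : (forall n, 0 <= u n) -> ex_series u -> sum_f_R0 u N <= Series u.
Proof.
  intros Hu Hex.
  rewrite (Series_incr_n u (S N)) by (auto; lia). simpl pred.
  assert (0 <= Series (fun k => u (S N + k)%nat)).
  { apply Series_nonneg. intros; auto. apply (ex_series_incr_n u (S N)); auto. }
  lra.
Qed.

Lemma psum_nonneg (u : nat -> R) N : (forall n, 0 <= u n) -> 0 <= sum_f_R0 u N.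
Proof. intros Hu; induction N; simpl; auto. specialize (Hu (S N)); lra. Qed.

Lemma mono_bounded (u : nat -> R) B : (forall n, 0 <= u n) -> (forall N, sum_f_R0 u N <= B) ->
  ex_series u /\ Series u <= B.
Proof.
  intros Hu HB.
  destruct (growing_cv (sum_f_R0 u)) as [l Hl].
  - intro n. simpl. specialize (Hu (S n)). lra.
  - exists B. intros x [N ->]. auto.
  - assert (Hs : is_series u l). { apply is_series_Reals. exact Hl. }
    split. { exists l; auto. }
    rewrite (is_series_unique u l Hs).
    assert (Hl' : is_lim_seq (sum_f_R0 u) l) by (apply is_lim_seq_Reals; auto).
    pose proof (is_lim_seq_le (sum_f_R0 u) (fun _ => B) l B HB Hl' (is_lim_seq_const B)) as H.
    simpl in H. exact H.
Qed.

Lemma psum_mono (u : nat -> R) a b : (forall n, 0 <= u n) -> (a < b)%nat -> sum_f_R0 u a + u b <= sum_f_R0 u b.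
Proof.
  intros Hu Hab. induction b. lia.
  destruct (Nat.eq_dec a b).
  - subst. simpl. apply Rle_refl.
  - simpl. assert (sum_f_R0 u a + u b <= sum_f_R0 u b) by (apply IHb; lia).
    pose proof (Hu b). lra.
Qed.

Lemma psum_le_mono (u : nat -> R) a b : (forall n, 0 <= u n) -> (a <= b)%nat -> sum_f_R0 u a <= sum_f_R0 u b.
Proof.
  intros Hu Hab. destruct (Nat.eq_dec a b). subst; lra.
  pose proof (psum_mono u a b Hu ltac:(lia)). specialize (Hu b). lra.
Qed.

Lemma subseq_series (u : nat -> R) (phi : nat -> nat) : (forall n, 0 <= u n) ->
  (forall k, (phi k < phi (S k))%nat) -> ex_series u ->
  ex_series (fun k => u (phi k)) /\ Series (fun k => u (phi k)) <= Series u.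
Proof.
  intros Hu Hphi Hex. apply mono_bounded. intros; auto.
  intro N. apply Rle_trans with (sum_f_R0 u (phi N)); [|apply psum_le_series; auto].
  induction N; simpl.
  - destruct (phi 0%nat) eqn:E. simpl; lra. pose proof (psum_mono u 0 (S n) Hu ltac:(lia)). pose proof (Hu 0%nat). simpl in *. lra.
  - pose proof (psum_mono u (phi N) (phi (S N)) Hu (Hphi N)). lra.
Qed.

Lemma psum_split (u : nat -> R) K :
  sum_f_R0 u (2 * K + 1) = sum_f_R0 (fun m => u (2 * m)%nat) K + sum_f_R0 (fun m => u (2 * m + 1)%nat) K.
Proof.
  induction K.
  - simpl. ring.
  - assert (E : forall n, sum_f_R0 u (S n) = sum_f_R0 u n + u (S n)) by reflexivity.
    replace (2 * S K + 1)%nat with (S (S (2 * K + 1))) by lia.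
    assert (E2 : forall f n, sum_f_R0 f (S n) = sum_f_R0 f n + f (S n)) by reflexivity.
    rewrite E, E, IHK, (E2 (fun m => u (2 * m)%nat)), (E2 (fun m => u (2 * m + 1)%nat)).
    replace (S (2 * K + 1)) with (2 * S K)%nat by lia.
    replace (S (2 * S K)) with (2 * S K + 1)%nat by lia. ring.
Qed.

Lemma split_series (u : nat -> R) : (forall n, 0 <= u n) ->
  ex_series (fun m => u (2 * m)%nat) -> ex_series (fun m => u (2 * m + 1)%nat) ->
  ex_series u /\ Series u = Series (fun m => u (2 * m)%nat) + Series (fun m => u (2 * m + 1)%nat).
Proof.
  intros Hu He Ho.
  set (A := Series (fun m => u (2 * m)%nat)). set (B := Series (fun m => u (2 * m + 1)%nat)).
  assert (Hb : forall N, sum_f_R0 u N <= A + B).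
  { intro N. apply Rle_trans with (sum_f_R0 u (2 * N + 1)). apply psum_le_mono; auto; lia.
    rewrite psum_split. unfold A, B.
    pose proof (psum_le_series (fun m => u (2 * m)%nat) N (fun n => Hu _) He).
    pose proof (psum_le_series (fun m => u (2 * m + 1)%nat) N (fun n => Hu _) Ho). lra. }
  destruct (mono_bounded u (A + B) Hu Hb) as [Hex Hle].
  split; auto. apply Rle_antisym; auto.
  assert (H1 : is_lim_seq (fun K => sum_f_R0 (fun m => u (2 * m)%nat) K + sum_f_R0 (fun m => u (2 * m + 1)%nat) K) (A + B)).
  { apply is_lim_seq_plus'; apply is_lim_seq_Reals; apply is_series_Reals; apply Series_correct; auto. }
  pose proof (is_lim_seq_le (fun K : nat => sum_f_R0 (fun m : nat => u (2 * m)%nat) K + sum_f_R0 (fun m : nat => u (2 * m + 1)%nat) K) (fun _ => Series u) (A + B) (Series u)) as H.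
  simpl in H. apply H. 2: exact H1. 2: apply is_lim_seq_const.
  intro K. rewrite <- psum_split. apply psum_le_series; auto.
Qed.

Lemma Cmod_pow_n (z : C) k : Cmod (@pow_n C_Ring z k) = Cmod z ^ k.
Proof. induction k; simpl. apply Cmod_1. rewrite <- IHk. apply Cmod_mult. Qed.

Lemma norm_R (x : R) : @norm R_AbsRing R_NormedModule x = Rabs x.
Proof. reflexivity. Qed.

Lemma norm_C (x : C) : @norm C_AbsRing C_NormedModule x = Cmod x.
Proof. reflexivity. Qed.

Lemma ex_series_le_R (u v : nat -> R) : (forall n, 0 <= u n <= v n) -> ex_series v -> ex_series u.
Proof.
  intros H Hv. apply (@ex_series_le R_AbsRing R_CompleteNormedModule u v); auto.
  intro n. rewrite norm_R. rewrite Rabs_pos_eq; apply H.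
Qed.

Lemma abs_conv (a : nat -> C) r : InAD a -> 0 <= r < 1 -> ex_series (fun n => Cmod (a n) * r ^ n).
Proof.
  intros Ha [Hr0 Hr1].
  set (r' := (r + 1) / 2).
  assert (Hr' : 0 < r' < 1) by (unfold r'; lra).
  assert (Hex : ex_pseries a (RtoC r')).
  { apply Ha. rewrite Cmod_R, Rabs_pos_eq; lra. }
  unfold ex_pseries in Hex. apply (@Cauchy_ex_series C_AbsRing C_CompleteNormedModule) in Hex.
  destruct (Hex (mkposreal 1 Rlt_0_1)) as [N HN].
  assert (Hb : forall n, (N <= n)%nat -> Cmod (a n) * r' ^ n <= 1).
  { intros n Hn. specialize (HN n n Hn Hn). rewrite sum_n_n in HN. simpl in HN.
    change (@norm C_AbsRing C_NormedModule (Cmult (@pow_n C_Ring (RtoC r') n) (a n)) < 1) in HN.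
    rewrite norm_C, Cmod_mult, Cmod_pow_n, Cmod_R, Rabs_pos_eq in HN by lra. lra. }
  apply (ex_series_incr_n _ N).
  apply ex_series_le_R with (v := fun k => (r / r') ^ (N + k)).
  - intro k. split.
    + apply Rmult_le_pos. apply Cmod_ge_0. apply pow_le; lra.
    + replace ((r / r') ^ (N + k)) with (r ^ (N + k) * / r' ^ (N + k)).
      2: { unfold Rdiv. rewrite Rpow_mult_distr, pow_inv. reflexivity. }
      specialize (Hb (N + k)%nat ltac:(lia)).
      assert (0 < r' ^ (N + k)) by (apply pow_lt; lra).
      apply Rmult_le_reg_r with (r' ^ (N + k)); auto.
      rewrite (Rmult_assoc (r ^ (N + k))), Rinv_l, Rmult_1_r by lra.
      assert (0 <= r ^ (N+k)) by (apply pow_le; lra).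
      rewrite Rmult_assoc, (Rmult_comm (r ^ (N+k))), <- Rmult_assoc. apply (Rmult_le_compat_r (r ^ (N+k))) in Hb; auto. lra.
  - apply (ex_series_incr_n (fun n => (r / r') ^ n) N).
    apply ex_series_geom. rewrite Rabs_pos_eq.
    apply Rmult_lt_reg_r with r'; try lra. unfold Rdiv. rewrite Rmult_assoc, Rinv_l by lra. unfold r'. lra.
    apply Rmult_le_pos; [lra| left; apply Rinv_0_lt_compat; lra].
Qed.

Lemma Cmod_le_2 (x : C) B : Rabs (fst x) <= B -> Rabs (snd x) <= B -> Cmod x <= 2 * B.
Proof.
  intros H1 H2. eapply Rle_trans. apply Cmod_2Rmax.
  assert (Rmax (Rabs (fst x)) (Rabs (snd x)) <= B) by (apply Rmax_lub; auto).
  assert (0 <= Rmax (Rabs (fst x)) (Rabs (snd x))) by (eapply Rle_trans; [apply Rabs_pos| apply Rmax_l]).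
  assert (sqrt 2 < 2).
  { rewrite <- (sqrt_square 2) at 2 by lra. apply sqrt_lt_1; lra. }
  assert (0 <= sqrt 2) by apply sqrt_pos. nra.
Qed.

Lemma im_le_Cmod' (c : C) : Rabs (Im c) <= Cmod c.
Proof.
  destruct c as [x y]. unfold Cmod, Im; simpl. rewrite <- sqrt_Rsqr_abs. apply sqrt_le_1_alt.
  unfold Rsqr. nra.
Qed.

Lemma abs_Re_term (a : nat -> C) z n : Rabs (Re (Cmult (a n) (@pow_n C_Ring z n))) <= Cmod (a n) * Cmod z ^ n.
Proof. eapply Rle_trans. apply re_le_Cmod. rewrite Cmod_mult, Cmod_pow_n. lra. Qed.

Lemma abs_Im_term (a : nat -> C) z n : Rabs (Im (Cmult (a n) (@pow_n C_Ring z n))) <= Cmod (a n) * Cmod z ^ n.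
Proof. eapply Rle_trans. apply im_le_Cmod'. rewrite Cmod_mult, Cmod_pow_n. lra. Qed.

Lemma ex_series_dom (t u : nat -> R) : (forall n, Rabs (t n) <= u n) -> ex_series u -> ex_series t.
Proof.
  intros H Hu. apply ex_series_Rabs. apply ex_series_le_R with u; auto.
  intro n; split; [apply Rabs_pos| auto].
Qed.

Lemma Series_dom (t u : nat -> R) : (forall n, Rabs (t n) <= u n) -> ex_series u -> Rabs (Series t) <= Series u.
Proof.
  intros H Hu. eapply Rle_trans. apply Series_Rabs. apply ex_series_le_R with u; auto.
  intro n; split; [apply Rabs_pos| auto].
  apply Series_le; auto. intro n; split; [apply Rabs_pos| auto].
Qed.

Lemma abs_to_pseries (a : nat -> C) z : ex_series (fun n => Cmod (a n) * Cmod z ^ n) -> ex_pseries a z.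
Proof.
  intros H. unfold ex_pseries.
  apply (@ex_series_le C_AbsRing C_CompleteNormedModule _ (fun n => Cmod (a n) * Cmod z ^ n)); auto.
  intro n. change (Cmod (Cmult (@pow_n C_Ring z n) (a n)) <= Cmod (a n) * Cmod z ^ n).
  rewrite Cmod_mult, Cmod_pow_n. lra.
Qed.

Lemma eval_bound (a : nat -> C) z : ex_series (fun n => Cmod (a n) * Cmod z ^ n) ->
  Cmod (eval a z) <= 2 * Series (fun n => Cmod (a n) * Cmod z ^ n).
Proof.
  intros H. unfold eval. apply Cmod_le_2; simpl; apply Series_dom; auto.
  intro; apply abs_Re_term. intro; apply abs_Im_term.
Qed.

Lemma eval_minus (a c : nat -> C) z : ex_series (fun n => Cmod (a n) * Cmod z ^ n) ->
  ex_series (fun n => Cmod (c n) * Cmod z ^ n) ->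
  eval (fun n => Cminus (a n) (c n)) z = Cminus (eval a z) (eval c z).
Proof.
  intros Ha Hc. unfold eval.
  assert (E1 : forall n, Re (Cmult (Cminus (a n) (c n)) (@pow_n C_Ring z n)) =
     Re (Cmult (a n) (@pow_n C_Ring z n)) - Re (Cmult (c n) (@pow_n C_Ring z n))).
  { intro n. destruct (a n), (c n), (@pow_n C_Ring z n). simpl. ring. }
  assert (E2 : forall n, Im (Cmult (Cminus (a n) (c n)) (@pow_n C_Ring z n)) =
     Im (Cmult (a n) (@pow_n C_Ring z n)) - Im (Cmult (c n) (@pow_n C_Ring z n))).
  { intro n. destruct (a n), (c n), (@pow_n C_Ring z n). simpl. ring. }
  rewrite (Series_ext _ _ E1), (Series_ext _ _ E2).
  rewrite !Series_minus; try (apply ex_series_dom with (1 := abs_Re_term _ z); auto);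
    try (apply ex_series_dom with (1 := abs_Im_term _ z); auto).
  reflexivity.
Qed.

Fixpoint rsum (g : nat -> R) (N : nat) : R :=
  match N with O => 0 | S N' => rsum g N' + g N' end.

Fixpoint csum (g : nat -> C) (N : nat) : C :=
  match N with O => RtoC 0 | S N' => Cplus (csum g N') (g N') end.

Lemma rsum_sum_f (g : nat -> R) N : rsum g (S N) = sum_f_R0 g N.
Proof. induction N. simpl; ring. change (rsum g (S (S N))) with (rsum g (S N) + g (S N)). rewrite IHN. reflexivity. Qed.

Lemma Re_csum g N : Re (csum g N) = rsum (fun n => Re (g n)) N.
Proof. induction N; simpl; auto. rewrite <- IHN. reflexivity. Qed.
Lemma Im_csum g N : Im (csum g N) = rsum (fun n => Im (g n)) N.
Proof. induction N; simpl; auto. rewrite <- IHN. reflexivity. Qed.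

Lemma R_tail (t u : nat -> R) N : (forall n, Rabs (t n) <= u n) -> ex_series u ->
  Rabs (Series t - rsum t N) <= Series (fun k => u (N + k)%nat).
Proof.
  intros H Hu. assert (Ht : ex_series t) by (apply ex_series_dom with u; auto).
  destruct N.
  - simpl. rewrite Rminus_0_r.
    apply Series_dom; auto.
  - rewrite (Series_incr_n t (S N)) by (auto; lia). simpl pred. rewrite rsum_sum_f.
    replace (sum_f_R0 t N + Series (fun k => t (S N + k)%nat) - sum_f_R0 t N) with (Series (fun k => t (S N + k)%nat)) by ring.
    apply Series_dom. intro; auto. apply (ex_series_incr_n u (S N)); auto.
Qed.

Lemma tail_small (u : nat -> R) : ex_series u -> forall eps, 0 < eps -> forall n0,
  exists N, (n0 < N)%nat /\ Series (fun k => u (N + k)%nat) < eps.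
Proof.
  intros Hu eps He n0.
  pose proof (Series_correct u Hu) as Hs. apply is_series_Reals in Hs.
  destruct (Hs eps He) as [N HN].
  exists (S (max N n0)). split. lia.
  specialize (HN (max N n0) ltac:(lia)). unfold R_dist in HN.
  pose proof (Series_incr_n u (S (max N n0)) ltac:(lia) Hu) as E. simpl pred in E.
  rewrite Rabs_minus_sym in HN. rewrite E in HN.
  replace (sum_f_R0 u (Init.Nat.max N n0) + Series (fun k => u (S (Init.Nat.max N n0) + k)%nat) -
      sum_f_R0 u (Init.Nat.max N n0)) with (Series (fun k => u (S (Init.Nat.max N n0) + k)%nat)) in HN by ring.
  eapply Rle_lt_trans; [apply Rle_abs| exact HN].
Qed.

Definition P (a : nat -> C) (z : C) (N : nat) : C := csum (fun m => Cmult (a m) (@pow_n C_Ring z m)) N.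

Lemma eval_tail (a : nat -> C) z N : ex_series (fun n => Cmod (a n) * Cmod z ^ n) ->
  Cmod (Cminus (eval a z) (P a z N)) <= 2 * Series (fun k => Cmod (a (N + k)%nat) * Cmod z ^ (N + k)).
Proof.
  intros H. apply Cmod_le_2; unfold eval, P; simpl.
  - pose proof (Re_csum (fun m => Cmult (a m) (@pow_n C_Ring z m)) N) as E. unfold Re in E. rewrite E.
    apply R_tail with (u := fun n => Cmod (a n) * Cmod z ^ n); auto. intro; apply abs_Re_term.
  - pose proof (Im_csum (fun m => Cmult (a m) (@pow_n C_Ring z m)) N) as E. unfold Im in E. rewrite E.
    apply R_tail with (u := fun n => Cmod (a n) * Cmod z ^ n); auto. intro; apply abs_Im_term.
Qed.

Definition e (th : R) : C := (cos th, sin th).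

Lemma e_add a b : Cmult (e a) (e b) = e (a + b).
Proof. unfold e, Cmult; simpl. rewrite cos_plus, sin_plus. f_equal; ring. Qed.

Lemma e_0 : e 0 = RtoC 1.
Proof. unfold e. rewrite cos_0, sin_0. reflexivity. Qed.

Lemma e_pow th m : @pow_n C_Ring (e th) m = e (INR m * th).
Proof.
  induction m.
  - simpl. rewrite Rmult_0_l, e_0. reflexivity.
  - simpl pow_n. rewrite IHm. change (Cmult (e th) (e (INR m * th)) = e (INR (S m) * th)).
    rewrite e_add, S_INR. f_equal; ring.
Qed.

Lemma Cpow_scal r th m : @pow_n C_Ring (Cmult (RtoC r) (e th)) m = Cmult (RtoC (r ^ m)) (e (INR m * th)).
Proof.
  induction m.
  - simpl. rewrite Rmult_0_l, e_0. change (RtoC 1 = Cmult (RtoC 1) (RtoC 1)). ring.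
  - simpl pow_n. rewrite IHm. change (Cmult (Cmult (RtoC r) (e th)) (Cmult (RtoC (r ^ m)) (e (INR m * th))) =
      Cmult (RtoC (r * r ^ m)) (e (INR (S m) * th))).
    replace (INR (S m) * th) with (th + INR m * th) by (rewrite S_INR; ring).
    rewrite <- e_add, RtoC_mult. ring.
Qed.

Lemma Cmod_e th : Cmod (e th) = 1.
Proof.
  unfold Cmod, e; simpl fst; simpl snd.
  assert (H : cos th ^ 2 + sin th ^ 2 = 1) by (pose proof (sin2_cos2 th); unfold Rsqr in *; nra).
  rewrite H. apply sqrt_1.
Qed.

Lemma e_int k : e (2 * INR k * PI) = RtoC 1 /\ e (- (2 * INR k * PI)) = RtoC 1.
Proof.
  pose proof (cos_period 0 k) as Hc. pose proof (sin_period 0 k) as Hs.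
  rewrite Rplus_0_l, cos_0 in Hc. rewrite Rplus_0_l, sin_0 in Hs.
  unfold e. rewrite cos_neg, sin_neg, Hc, Hs, Ropp_0. split; reflexivity.
Qed.

Lemma e_ne1_pos th : 0 < th < 2 * PI -> e th <> RtoC 1.
Proof.
  intros [H1 H2] He. unfold e, RtoC in He. injection He as Hc Hs.
  destruct (Rtotal_order th PI) as [Hl | [Heq | Hg]].
  - pose proof (sin_gt_0 th H1 Hl). lra.
  - subst. rewrite cos_PI in Hc. lra.
  - pose proof (sin_lt_0 th Hg H2). lra.
Qed.

Lemma e_ne1_neg th : 0 < th < 2 * PI -> e (- th) <> RtoC 1.
Proof.
  intros H He. apply (e_ne1_pos th H). unfold e in *. rewrite cos_neg, sin_neg in He.
  unfold RtoC in *. injection He as Hc Hs. rewrite Hc. f_equal. lra.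
Qed.

Lemma csum_ext_lt f g N : (forall m, (m < N)%nat -> f m = g m) -> csum f N = csum g N.
Proof. induction N; intros H; simpl; auto. rewrite IHN, H; auto. Qed.

Lemma csum_mult_l c f N : Cmult c (csum f N) = csum (fun m => Cmult c (f m)) N.
Proof. induction N; simpl. ring. rewrite <- IHN. ring. Qed.

Lemma csum_plus f g N : csum (fun m => Cplus (f m) (g m)) N = Cplus (csum f N) (csum g N).
Proof. induction N; simpl. ring. rewrite IHN. ring. Qed.

Lemma csum_zero f N : (forall m, (m < N)%nat -> f m = RtoC 0) -> csum f N = RtoC 0.
Proof. induction N; intros H; simpl; auto. rewrite IHN, H; auto. ring. Qed.

Lemma csum_swap (F : nat -> nat -> C) N M :
  csum (fun j => csum (fun m => F j m) M) N = csum (fun m => csum (fun j => F j m) N) M.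
Proof.
  induction N; simpl.
  - symmetry; apply csum_zero; auto.
  - rewrite IHN. rewrite <- csum_plus. reflexivity.
Qed.


Lemma csum_single f n N : (n < N)%nat -> (forall m, (m < N)%nat -> m <> n -> f m = RtoC 0) -> csum f N = f n.
Proof.
  induction N; intros Hn H. lia. simpl.
  destruct (Nat.eq_dec n N).
  - subst. rewrite csum_zero. ring. intros; apply H; lia.
  - rewrite IHN, (H N); try lia. ring. intros; apply H; lia.
Qed.

Lemma csum_const1 N : csum (fun _ => RtoC 1) N = RtoC (INR N).
Proof. induction N; simpl csum. reflexivity. rewrite IHN, S_INR, <- RtoC_plus. reflexivity. Qed.

Lemma Cmod_csum f N : Cmod (csum f N) <= rsum (fun m => Cmod (f m)) N.
Proof.
  induction N; simpl. rewrite Cmod_0; lra.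
  eapply Rle_trans. apply Cmod_triangle. lra.
Qed.

Lemma rsum_le f g N : (forall m, (m < N)%nat -> f m <= g m) -> rsum f N <= rsum g N.
Proof. induction N; intros H; simpl. lra. pose proof (H N ltac:(lia)). pose proof (IHN ltac:(intros; apply H; lia)). lra. Qed.

Lemma rsum_const c N : rsum (fun _ => c) N = INR N * c.
Proof. induction N; simpl rsum. simpl; ring. rewrite IHN, S_INR. ring. Qed.

Lemma geom_id (w : C) N : Cmult (csum (fun j => @pow_n C_Ring w j) N) (Cminus (RtoC 1) w) = Cminus (RtoC 1) (@pow_n C_Ring w N).
Proof.
  induction N; simpl csum.
  - change (Cmult (RtoC 0) (Cminus (RtoC 1) w) = Cminus (RtoC 1) (RtoC 1)). ring.
  - change (@pow_n C_Ring w (S N)) with (Cmult w (@pow_n C_Ring w N)).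
    replace (Cmult (Cplus (csum (fun j => @pow_n C_Ring w j) N) (@pow_n C_Ring w N)) (Cminus (RtoC 1) w))
      with (Cplus (Cmult (csum (fun j => @pow_n C_Ring w j) N) (Cminus (RtoC 1) w)) (Cmult (@pow_n C_Ring w N) (Cminus (RtoC 1) w))) by ring.
    rewrite IHN. ring.
Qed.

Lemma geom_zero (c w : C) N : @pow_n C_Ring w N = RtoC 1 -> w <> RtoC 1 ->
  csum (fun j => Cmult c (@pow_n C_Ring w j)) N = RtoC 0.
Proof.
  intros H1 H2. rewrite <- csum_mult_l.
  assert (Hw : Cminus (RtoC 1) w <> RtoC 0).
  { intro E. apply H2. assert (Ew : w = Cminus (RtoC 1) (Cminus (RtoC 1) w)) by ring. rewrite E in Ew. rewrite Ew. ring. }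
  pose proof (geom_id w N) as G. rewrite H1 in G.
  assert (HS : csum (fun j => @pow_n C_Ring w j) N = RtoC 0).
  { replace (csum (fun j => @pow_n C_Ring w j) N) with
      (Cdiv (Cmult (csum (fun j => @pow_n C_Ring w j) N) (Cminus (RtoC 1) w)) (Cminus (RtoC 1) w)) by (field; exact Hw).
    rewrite G. field. exact Hw. }
  change (csum (@pow_n C_Ring w) N) with (csum (fun j => @pow_n C_Ring w j) N). rewrite HS. ring.
Qed.

Lemma angle_facts k N : (0 < k < N)%nat ->
  0 < INR k * (2 * PI / INR N) < 2 * PI /\ INR N * (INR k * (2 * PI / INR N)) = 2 * INR k * PI.
Proof.
  intros Hk. assert (HN : 0 < INR N) by (apply lt_0_INR; lia).
  assert (Hk0 : 0 < INR k) by (apply lt_0_INR; lia).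
  assert (HkN : INR k < INR N) by (apply lt_INR; lia).
  pose proof PI_RGT_0.
  split. split.
  - apply Rmult_lt_0_compat; auto. unfold Rdiv. apply Rmult_lt_0_compat; [lra| apply Rinv_0_lt_compat; auto].
  - replace (INR k * (2 * PI / INR N)) with (2 * PI * (INR k / INR N)) by (field; lra).
    assert (INR k / INR N < 1). { apply Rmult_lt_reg_r with (INR N); auto. unfold Rdiv. rewrite Rmult_assoc, Rinv_l; lra. }
    assert (0 < 2 * PI) by lra. nra.
  - field. lra.
Qed.

Lemma dirichlet (c : C) m n N : (m < N)%nat -> (n < N)%nat -> m <> n ->
  csum (fun j => Cmult c (e (INR j * ((INR m - INR n) * (2 * PI / INR N))))) N = RtoC 0.
Proof.
  intros Hm Hn Hmn.
  assert (Hc : (m < n \/ n < m)%nat) by lia. destruct Hc as [Hlt | Hgt].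
  - destruct (angle_facts (n - m) N ltac:(lia)) as [Ha Hb].
    set (th := INR (n - m) * (2 * PI / INR N)) in *.
    rewrite (csum_ext_lt _ (fun j => Cmult c (@pow_n C_Ring (e (- th)) j))).
    + apply geom_zero. rewrite e_pow. replace (INR N * - th) with (- (2 * INR (n - m) * PI)) by lra.
      apply e_int. apply e_ne1_neg; auto.
    + intros j _. rewrite e_pow. f_equal. f_equal. unfold th. rewrite minus_INR by lia. ring.
  - destruct (angle_facts (m - n) N ltac:(lia)) as [Ha Hb].
    set (th := INR (m - n) * (2 * PI / INR N)) in *.
    rewrite (csum_ext_lt _ (fun j => Cmult c (@pow_n C_Ring (e th) j))).
    + apply geom_zero. rewrite e_pow. rewrite Hb. apply e_int. apply e_ne1_pos; auto.
    + intros j _. rewrite e_pow. f_equal. f_equal. unfold th. rewrite minus_INR by lia. ring.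
Qed.

Lemma filter_id (b : nat -> C) (rho : R) N n : (n < N)%nat ->
  csum (fun j => Cmult (e (- (INR j * (INR n * (2 * PI / INR N)))))
                       (P b (Cmult (RtoC rho) (e (INR j * (2 * PI / INR N)))) N)) N
  = Cmult (RtoC (INR N)) (Cmult (b n) (RtoC (rho ^ n))).
Proof.
  intros Hn. set (al := 2 * PI / INR N).
  rewrite (csum_ext_lt _ (fun j => csum (fun m => Cmult (Cmult (b m) (RtoC (rho ^ m))) (e (INR j * ((INR m - INR n) * al)))) N)).
  2: { intros j _. unfold P. rewrite csum_mult_l. apply csum_ext_lt. intros m _.
       rewrite Cpow_scal.
       replace (e (INR j * ((INR m - INR n) * al))) with (Cmult (e (- (INR j * (INR n * al)))) (e (INR m * (INR j * al))))
         by (rewrite e_add; f_equal; ring).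
       ring. }
  rewrite csum_swap. rewrite (csum_single _ n N Hn).
  - rewrite (csum_ext_lt _ (fun _ => Cmult (Cmult (b n) (RtoC (rho ^ n))) (RtoC 1))).
    + rewrite <- csum_mult_l, csum_const1. ring.
    + intros j _. f_equal. rewrite Rminus_diag, Rmult_0_l, Rmult_0_r. apply e_0.
  - intros m Hm Hmn. apply dirichlet; auto.
Qed.

Lemma cauchy_est (b : nat -> C) rho M : 0 < rho -> ex_series (fun n => Cmod (b n) * rho ^ n) ->
  (forall z, Cmod z = rho -> Cmod (eval b z) <= M) -> forall n, Cmod (b n) * rho ^ n <= M.
Proof.
  intros Hr Hs Hb n.
  assert (Heps : forall eps, 0 < eps -> Cmod (b n) * rho ^ n <= M + 2 * eps).
  { intros eps He.
    destruct (tail_small _ Hs eps He n) as [N [HnN HT]].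
    assert (HN : 0 < INR N) by (apply lt_0_INR; lia).
    pose proof (filter_id b rho N n HnN) as Hid.
    set (al := 2 * PI / INR N) in *.
    assert (Hz : forall j, Cmod (Cmult (RtoC rho) (e (INR j * al))) = rho).
    { intro j. rewrite Cmod_mult, Cmod_e, Cmod_R, Rabs_pos_eq; lra. }
    assert (HP : forall j, Cmod (P b (Cmult (RtoC rho) (e (INR j * al))) N) <= M + 2 * eps).
    { intro j. set (z := Cmult (RtoC rho) (e (INR j * al))).
      assert (Hsz : ex_series (fun n0 => Cmod (b n0) * Cmod z ^ n0)) by (assert (Hzz : Cmod z = rho) by apply Hz; rewrite Hzz; auto).
      pose proof (eval_tail b z N Hsz) as H1.
      pose proof (Hb z (Hz j)) as H2.
      replace (P b z N) with (Cminus (eval b z) (Cminus (eval b z) (P b z N))) by ring.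
      eapply Rle_trans. unfold Cminus at 1. apply Cmod_triangle. rewrite Cmod_opp.
      assert (Hzz : Cmod z = rho) by apply Hz. rewrite Hzz in H1. lra. }
    assert (Hmod : INR N * (Cmod (b n) * rho ^ n) <= INR N * (M + 2 * eps)).
    { replace (INR N * (Cmod (b n) * rho ^ n)) with (Cmod (Cmult (RtoC (INR N)) (Cmult (b n) (RtoC (rho ^ n))))).
      2: { rewrite !Cmod_mult, !Cmod_R, !Rabs_pos_eq; try lra. apply pow_le; lra. }
      rewrite <- Hid. eapply Rle_trans. apply Cmod_csum.
      rewrite <- (rsum_const (M + 2 * eps) N). apply (rsum_le _ (fun _ => M + 2 * eps)). intros j _.
      rewrite Cmod_mult, Cmod_e, Rmult_1_l. apply HP. }
    apply Rmult_le_reg_l with (INR N); auto. }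
  destruct (Rle_or_lt (Cmod (b n) * rho ^ n) M) as [H|H]; auto.
  specialize (Heps ((Cmod (b n) * rho ^ n - M) / 4) ltac:(lra)). lra.
Qed.

Lemma collatzT_even m : collatzT (2 * m) = m.
Proof.
  unfold collatzT. replace (Nat.even (2 * m)) with true.
  apply Nat.div2_double. symmetry. apply Nat.even_spec. exists m; lia.
Qed.

Lemma collatzT_odd k : collatzT (2 * k + 1) = (3 * k + 2)%nat.
Proof.
  unfold collatzT. replace (Nat.even (2 * k + 1)) with false.
  replace (3 * (2 * k + 1) + 1)%nat with (2 * (3 * k + 2))%nat by lia. apply Nat.div2_double.
  symmetry. apply Bool.not_true_iff_false. intro H. apply Nat.even_spec in H.
  destruct H as [x Hx]. lia.
Qed.

Lemma collatzT_le n : (collatzT n <= 2 * n)%nat.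
Proof.
  destruct (Nat.Even_or_Odd n) as [[m Hm] | [m Hm]]; subst.
  - rewrite collatzT_even. lia.
  - rewrite collatzT_odd. lia.
Qed.

Lemma pow_anti s a b : 0 <= s <= 1 -> (a <= b)%nat -> s ^ b <= s ^ a.
Proof.
  intros Hs Hab. induction Hab. lra.
  simpl. assert (0 <= s ^ m) by (apply pow_le; lra). nra.
Qed.

Lemma Fop_abs_gen (f : nat -> C) s x : 0 <= s < 1 -> 0 <= x -> x <= s * s ->
  ex_series (fun n => Cmod (f n) * s ^ n) -> ex_series (fun n => Cmod (Fop f n) * x ^ n).
Proof.
  intros Hs Hx Hxs Hc.
  set (c := fun n => Cmod (f n) * s ^ n).
  apply ex_series_le_R with (v := fun n => c (collatzT n)).
  - intro n. unfold Fop, c. split.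
    + apply Rmult_le_pos. apply Cmod_ge_0. apply pow_le; lra.
    + apply Rmult_le_compat_l. apply Cmod_ge_0.
      apply Rle_trans with (s ^ (2 * n)).
      * rewrite pow_mult. apply pow_incr. split; auto. simpl; lra.
      * apply pow_anti. lra. apply collatzT_le.
  - assert (Hc0 : forall n, 0 <= c n) by (intro; unfold c; apply Rmult_le_pos; [apply Cmod_ge_0| apply pow_le; lra]).
    apply split_series.
    + intro; auto.
    + apply ex_series_ext with c. intro m. rewrite collatzT_even. reflexivity. exact Hc.
    + apply ex_series_ext with (fun m => c (3 * m + 2)%nat). intro m. rewrite collatzT_odd. reflexivity.
      apply subseq_series; auto. intro; lia.
Qed.

Lemma Fop_abs (f : nat -> C) z : InAD f -> Cmod z < 1 -> ex_series (fun n => Cmod (Fop f n) * Cmod z ^ n).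
Proof.
  intros Hf Hz. pose proof (Cmod_ge_0 z).
  apply Fop_abs_gen with (s := sqrt (Cmod z)); auto.
  - split. apply sqrt_pos. rewrite <- sqrt_1. apply sqrt_lt_1_alt; lra.
  - rewrite sqrt_sqrt; lra.
  - apply abs_conv; auto. split. apply sqrt_pos. rewrite <- sqrt_1. apply sqrt_lt_1_alt; lra.
Qed.

Lemma part1 (f : nat -> C) : InAD f -> InAD (Fop f).
Proof. intros Hf z Hz. apply abs_to_pseries. apply Fop_abs; auto. Qed.

Lemma abs_minus (a c : nat -> C) x : 0 <= x ->
  ex_series (fun n => Cmod (a n) * x ^ n) -> ex_series (fun n => Cmod (c n) * x ^ n) ->
  ex_series (fun n => Cmod (Cminus (a n) (c n)) * x ^ n).
Proof.
  intros Hx Ha Hc.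
  apply ex_series_le_R with (v := fun n => Cmod (a n) * x ^ n + Cmod (c n) * x ^ n).
  - intro n. assert (0 <= x ^ n) by (apply pow_le; lra). split.
    + apply Rmult_le_pos; auto; apply Cmod_ge_0.
    + rewrite <- Rmult_plus_distr_r. apply Rmult_le_compat_r; auto.
      unfold Cminus. eapply Rle_trans. apply Cmod_triangle. rewrite Cmod_opp. lra.
  - apply (ex_series_plus (V := R_NormedModule)); auto.
Qed.

Lemma coef_est (a c : nat -> C) rho M : InAD a -> InAD c -> 0 < rho < 1 ->
  (forall z, Cmod z <= rho -> Cmod (Cminus (eval a z) (eval c z)) < M) ->
  forall n, Cmod (Cminus (a n) (c n)) * rho ^ n <= M.
Proof.
  intros Ha Hc Hr H. apply cauchy_est. lra.
  - apply (abs_minus a c rho); try lra; apply abs_conv; auto; lra.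
  - intros z Hz. rewrite eval_minus.
    + left. apply H. lra.
    + apply abs_conv; auto. split; [apply Cmod_ge_0| rewrite Hz; lra].
    + apply abs_conv; auto. split; [apply Cmod_ge_0| rewrite Hz; lra].
Qed.

Lemma part2 (fs : nat -> nat -> C) (f : nat -> C) :
  (forall k, InAD (fs k)) -> InAD f -> cvg_AD fs f -> cvg_AD (fun k => Fop (fs k)) (Fop f).
Proof.
  intros Hfs Hf Hc r [Hr0 Hr1] eps He.
  set (rho := sqrt ((1 + r) / 2)).
  assert (Hrho2 : rho * rho = (1 + r) / 2) by (unfold rho; apply sqrt_sqrt; lra).
  assert (Hrho : 0 < rho < 1).
  { unfold rho. split. apply sqrt_lt_R0; lra.
    assert (H1 : 0 <= (1 + r) / 2 < 1) by lra. apply sqrt_lt_1_alt in H1. rewrite sqrt_1 in H1. exact H1. }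
  set (q := r / (rho * rho)).
  assert (Hq : 0 <= q < 1).
  { assert (Eq : q = 2 * r * / (1 + r)) by (unfold q; rewrite Hrho2; field; lra).
    rewrite Eq. split. apply Rmult_le_pos; [lra| left; apply Rinv_0_lt_compat; lra].
    apply Rmult_lt_reg_r with (1 + r). lra. rewrite Rmult_assoc, Rinv_l by lra. lra. }
  assert (Hrq : r = q * (rho * rho)) by (unfold q; field; lra).
  set (M := eps * (1 - q) / 4).
  assert (HM : 0 < M) by (unfold M; apply Rmult_lt_0_compat; [apply Rmult_lt_0_compat; lra| lra]).
  destruct (Hc rho (conj (Rlt_le _ _ (proj1 Hrho)) (proj2 Hrho)) M HM) as [N HN].
  exists N. intros k Hk z Hz.
  pose proof (coef_est (fs k) f rho M (Hfs k) Hf Hrho (HN k Hk)) as Hb.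
  assert (Hz1 : Cmod z < 1) by lra.
  pose proof (Cmod_ge_0 z) as Hz0.
  rewrite <- eval_minus by (apply Fop_abs; auto).
  eapply Rle_lt_trans. apply eval_bound.
  { apply (abs_minus (Fop (fs k)) (Fop f) (Cmod z)); auto; apply Fop_abs; auto. }
  apply Rle_lt_trans with (2 * Series (fun n => M * q ^ n)).
  - apply Rmult_le_compat_l. lra. apply Series_le.
    + intro n. split. apply Rmult_le_pos. apply Cmod_ge_0. apply pow_le; lra.
      unfold Fop. set (beta := Cmod (Cminus (fs k (collatzT n)) (f (collatzT n)))).
      specialize (Hb (collatzT n)). fold beta in Hb.
      assert (Hbeta : 0 <= beta) by apply Cmod_ge_0.
      assert (H1 : Cmod z ^ n <= q ^ n * rho ^ (2 * n)).
      { rewrite pow_mult, <- Rpow_mult_distr. apply pow_incr. split; auto. simpl. rewrite Rmult_1_r. lra. }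
      assert (H2 : rho ^ (2 * n) <= rho ^ (collatzT n)) by (apply pow_anti; [lra| apply collatzT_le]).
      assert (H3 : 0 <= q ^ n) by (apply pow_le; lra).
      assert (H4 : 0 <= rho ^ (2 * n)) by (apply pow_le; lra).
      apply Rle_trans with (beta * (q ^ n * rho ^ (2 * n))). apply Rmult_le_compat_l; auto.
      apply Rle_trans with (q ^ n * (beta * rho ^ (collatzT n))).
      * rewrite <- Rmult_assoc, (Rmult_comm beta), Rmult_assoc. apply Rmult_le_compat_l; auto.
        apply Rmult_le_compat_l; auto.
      * rewrite Rmult_comm. apply Rmult_le_compat_r; auto.
    + apply (ex_series_scal_l (V := R_NormedModule) M (fun n => q ^ n)). apply ex_series_geom. rewrite Rabs_pos_eq; lra.
  - rewrite Series_scal_l, Series_geom by (rewrite Rabs_pos_eq; lra).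
    unfold M. field_simplify; [lra| lra].
Qed.

Lemma part4 (fs : nat -> nat -> C) (g : nat -> C) :
  (forall k, InAD (fs k)) -> InAD g -> cvg_AD (fun k => Fop (fs k)) g ->
  exists f : nat -> C, InAD f /\ g = Fop f.
Proof.
  intros Hfs Hg Hc.
  assert (Hcoef : forall eps, 0 < eps -> exists N, forall n,
     Cmod (Cminus (Fop (fs N) n) (g n)) * (1/2) ^ n <= eps).
  { intros eps He. destruct (Hc (1/2) ltac:(lra) eps He) as [N HN]. exists N.
    apply coef_est; auto. apply part1; auto. lra. }
  assert (Hodd : forall k, g (2 * k + 1)%nat = g (6 * k + 4)%nat).
  { intro k. set (n1 := (2 * k + 1)%nat). set (n2 := (6 * k + 4)%nat).
    set (p := (1/2) ^ n2).
    assert (Hp : 0 < p) by (apply pow_lt; lra).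
    assert (Hp1 : p <= (1/2) ^ n1) by (apply pow_anti; [lra| unfold n1, n2; lia]).
    assert (Hsm : forall eps, 0 < eps -> Cmod (Cminus (g n1) (g n2)) <= eps).
    { intros eps He. destruct (Hcoef (eps * p / 2) ltac:(apply Rmult_lt_0_compat; [apply Rmult_lt_0_compat|]; lra)) as [N HN].
      assert (Eh : Fop (fs N) n1 = Fop (fs N) n2).
      { unfold Fop, n1, n2. rewrite collatzT_odd. replace (6 * k + 4)%nat with (2 * (3 * k + 2))%nat by lia.
        rewrite collatzT_even. reflexivity. }
      pose proof (HN n1) as H1. pose proof (HN n2) as H2. fold p in H2.
      set (d1 := Cmod (Cminus (Fop (fs N) n1) (g n1))) in *.
      set (d2 := Cmod (Cminus (Fop (fs N) n2) (g n2))) in *.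
      assert (Hd1 : 0 <= d1) by apply Cmod_ge_0. assert (Hd2 : 0 <= d2) by apply Cmod_ge_0.
      assert (H1' : d1 * p <= eps * p / 2) by (eapply Rle_trans; [|exact H1]; apply Rmult_le_compat_l; auto).
      assert (Htri : Cmod (Cminus (g n1) (g n2)) <= d1 + d2).
      { unfold d1, d2. rewrite <- Eh.
        replace (Cminus (g n1) (g n2)) with (Cplus (Cminus (Fop (fs N) n1) (g n2)) (Copp (Cminus (Fop (fs N) n1) (g n1)))) by ring.
        eapply Rle_trans. apply Cmod_triangle. rewrite Cmod_opp. lra. }
      assert ((d1 + d2) * p <= eps * p) by lra.
      apply Rmult_le_reg_r in H; auto. lra. }
    assert (Cmod (Cminus (g n1) (g n2)) = 0).
    { apply Rle_antisym. 2: apply Cmod_ge_0.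
      destruct (Rle_or_lt (Cmod (Cminus (g n1) (g n2))) 0) as [H|H]; auto.
      assert (Hh : 0 < Cmod (Cminus (g n1) (g n2)) / 2) by lra.
      specialize (Hsm _ Hh). lra. }
    apply Cmod_eq_0 in H.
    replace (g n1) with (Cplus (Cminus (g n1) (g n2)) (g n2)) by ring. rewrite H. ring. }
  exists (fun m => g (2 * m)%nat). split.
  - intros z Hz. apply abs_to_pseries. pose proof (Cmod_ge_0 z).
    set (s := sqrt (Cmod z)).
    assert (Hs : 0 <= s < 1).
    { unfold s. split. apply sqrt_pos. assert (H1 : 0 <= Cmod z < 1) by lra. apply sqrt_lt_1_alt in H1. rewrite sqrt_1 in H1. exact H1. }
    assert (Hss : s * s = Cmod z) by (unfold s; apply sqrt_sqrt; lra).
    apply ex_series_ext with (fun m => Cmod (g (2 * m)%nat) * s ^ (2 * m)).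
    { intro m. rewrite pow_mult. simpl. rewrite Rmult_1_r, Hss. reflexivity. }
    apply (subseq_series (fun n => Cmod (g n) * s ^ n) (fun m => (2 * m)%nat)).
    + intro n. apply Rmult_le_pos. apply Cmod_ge_0. apply pow_le; lra.
    + intro; lia.
    + apply abs_conv; auto.
  - apply functional_extensionality. intro n. unfold Fop.
    destruct (Nat.Even_or_Odd n) as [[m Hm] | [m Hm]]; subst.
    + rewrite collatzT_even. reflexivity.
    + rewrite collatzT_odd. rewrite Hodd. f_equal. lia.
Qed.

Lemma part5 (f : nat -> C) : InH2 f ->
  InH2 (Fop f) /\ H2norm (Fop f) <= sqrt 2 * H2norm f /\ H2norm f <= H2norm (Fop f).
Proof.
  intros Hf. unfold InH2, H2norm in *.
  set (c := fun n => Cmod (f n) ^ 2).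
  assert (Hc0 : forall n, 0 <= c n) by (intro; unfold c; apply pow2_ge_0).
  destruct (subseq_series c (fun m => (3 * m + 2)%nat) Hc0 ltac:(intro; cbv beta; lia) Hf) as [Hsub Hle].
  assert (He : ex_series (fun m => Cmod (Fop f (2 * m)%nat) ^ 2)).
  { apply ex_series_ext with c. intro m. unfold Fop. rewrite collatzT_even. reflexivity. exact Hf. }
  assert (Ho : ex_series (fun m => Cmod (Fop f (2 * m + 1)%nat) ^ 2)).
  { apply ex_series_ext with (fun m => c (3 * m + 2)%nat). intro m. unfold Fop. rewrite collatzT_odd. reflexivity. exact Hsub. }
  destruct (split_series (fun n => Cmod (Fop f n) ^ 2) ltac:(intro; apply pow2_ge_0) He Ho) as [Hex HS].
  rewrite (Series_ext (fun m => Cmod (Fop f (2 * m)%nat) ^ 2) c) in HS by (intro m; unfold Fop; rewrite collatzT_even; reflexivity).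
  rewrite (Series_ext (fun m => Cmod (Fop f (2 * m + 1)%nat) ^ 2) (fun m => c (3 * m + 2)%nat)) in HS
    by (intro m; unfold Fop; rewrite collatzT_odd; reflexivity).
  assert (HB : 0 <= Series (fun m => c (3 * m + 2)%nat)) by (apply Series_nonneg; auto).
  assert (HA : 0 <= Series c) by (apply Series_nonneg; auto).
  split; auto. rewrite HS. fold c. split.
  - rewrite <- sqrt_mult by lra. apply sqrt_le_1_alt. lra.
  - apply sqrt_le_1_alt. lra.
Qed.

Theorem mainTheorem6 :
  (* F maps A(D) into A(D) *)
  (forall f : nat -> C, InAD f -> InAD (Fop f)) /\
  (* F is continuous on A(D) (A(D) is metrizable: sequential continuity) *)
  (forall (fs : nat -> nat -> C) (f : nat -> C),
      (forall k, InAD (fs k)) -> InAD f -> cvg_AD fs f ->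
      cvg_AD (fun k => Fop (fs k)) (Fop f)) /\
  (* F is injective on A(D) *)
  (forall f g : nat -> C, InAD f -> InAD g -> Fop f = Fop g -> f = g) /\
  (* F has closed range in A(D) (sequential closedness) *)
  (forall (fs : nat -> nat -> C) (g : nat -> C),
      (forall k, InAD (fs k)) -> InAD g -> cvg_AD (fun k => Fop (fs k)) g ->
      exists f : nat -> C, InAD f /\ g = Fop f) /\
  (* F maps H^2 into H^2, with norm <= sqrt 2, and is expansive *)
  (forall f : nat -> C, InH2 f ->
      InH2 (Fop f) /\
      H2norm (Fop f) <= sqrt 2 * H2norm f /\
      H2norm f <= H2norm (Fop f)).
Proof.
  split. exact part1.
  split. exact part2.
  split.
  { intros f g _ _ E. apply functional_extensionality. intro m.
    pose proof (f_equal (fun h => h (2 * m)%nat) E) as E'. cbv beta in E'. unfold Fop in E'.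
    rewrite collatzT_even in E'. exact E'. }
  split. exact part4.
  exact part5.
Qed.
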